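(* Let $Z$ be a compact Hausdorff space containing (as a subspace) a homeomorphic copy of the one-point compactification of an uncountable discrete space, and let $n\in\mathbb{Z}_{>0}$. Then for every $d$ with $2\le d\le n$, the subspace $$Z_{(d)}:=\{\mathbf z\subseteq Z:\ |\mathbf z|=d\}\subseteq Z_{[n]}$$ (the stratum of $Z_{[n]}$ consisting of the points whose fiber under $\pi:Z_{[n]}^{\subseteq}\to Z_{[n]}$ has exactly $d$ elements) is not a normal topological space.
   Context: $Z_{[n]}:=\{\mathbf z\subseteq Z:\ 1\le|\mathbf z|\le n\}$ carries the quotient topology from $Z^n$ via $(z_i)_i\mapsto\{z_i\}_i$ (equivalently the Vietoris topology); $Z_{[n]}^{\subseteq}:=\{(z,x)\in Z\times Z_{[n]}: z\in x\}$ and $\pi$ is the second projection. A space is normal if any two disjoint closed subsets have disjoint open neighborhoods. *)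

(* Defs.v *)
From HB Require Import structures.
From mathcomp Require Import all_boot all_order all_algebra.
From mathcomp Require Import all_classical all_reals all_analysis.
Set Implicit Arguments. Unset Strict Implicit. Unset Printing Implicit Defensive.
Import Order.TTheory GRing.Theory Num.Theory.
Local Open Scope classical_set_scope.
Local Open Scope card_scope.

Definition embedding {X Y : topologicalType} (f : X -> Y) : Prop :=
  [/\ injective f, continuous f &
      forall U : set X, open U -> exists V : set Y, open V /\ f @` U = V `&` range f].

(* Z_[n] = { z subset of Z : 1 <= |z| <= n } *)
Definition Zbr (Z : Type) (n : nat) : set (set Z) :=
  [set A | A !=set0 /\ A #<= `I_n].
Arguments Zbr : clear implicits.

(* The quotient map Z^n -> Z_[n], (z_i)_i |-> {z_i}_i. *)
Definition symq (Z : Type) (n : nat) (f : 'I_n -> Z) : set Z := range f.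

(* Open subsets of Z_[n] for the quotient topology from Z^n (product topology). *)
Definition Zbr_open (Z : topologicalType) (n : nat) (W : set (set Z)) : Prop :=
  W `<=` Zbr Z n /\ @open {ptws 'I_n -> Z} (@symq Z n @^-1` W).

Definition Zstr (Z : Type) (d : nat) : set (set Z) := [set A | A #= `I_d].
Arguments Zstr : clear implicits.

Definition Zstr_open (Z : topologicalType) (n d : nat) (U : set (set Z)) : Prop :=
  exists W, @Zbr_open Z n W /\ U = W `&` Zstr Z d.

Definition Zstr_closed (Z : topologicalType) (n d : nat) (C : set (set Z)) : Prop :=
  C `<=` Zstr Z d /\ @Zstr_open Z n d (Zstr Z d `\` C).

Definition Zstr_normal (Z : topologicalType) (n d : nat) : Prop :=
  forall A B : set (set Z), @Zstr_closed Z n d A -> @Zstr_closed Z n d B ->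
    A `&` B = set0 ->
    exists U V, [/\ @Zstr_open Z n d U, @Zstr_open Z n d V, A `<=` U, B `<=` V &
                    U `&` V = set0].

(* Main.v *)
Require Import Defs.
From HB Require Import structures.
From mathcomp Require Import all_boot all_order all_algebra.
From mathcomp Require Import all_classical all_reals all_analysis.
From mathcomp Require Import zify.
Local Open Scope classical_set_scope.
Local Open Scope card_scope.

Definition ptd {X : topologicalType} (x0 : X) : Type := X.
HB.instance Definition _ (X : topologicalType) (x0 : X) := Topological.on (ptd x0).
HB.instance Definition _ (X : topologicalType) (x0 : X) := isPointed.Build (ptd x0) x0.

Lemma compact_discrete_finite (X : discreteTopologicalType) (C : set X) :
  compact C -> finite_set C.
Proof.
move=> cC; have [->|/set0P [x0 Cx0]] := eqVneq C set0; first exact: finite_set0.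
have : @cover_compact (ptd x0) C by rewrite -(@compact_cover (ptd x0)).
move=> /(_ X C (fun x => [set x])) [].
- by move=> i _; exact: (@discrete_open X).
- by move=> x Cx; exists x.
move=> D' _ CD'; apply: (sub_finite_set _ (finite_fset D')).
by move=> x /CD' [i /= iD' ->].
Qed.

Lemma opc_nbhs_none (X : topologicalType) (P : set (one_point_compactification X)) :
  nbhs (None : one_point_compactification X) P -> exists C : set X, compact C /\ forall x, ~ C x -> P (Some x).
Proof.
case=> C [cC clC] sub; exists C; split => // x nCx; apply: sub; left; exists x => //.
Qed.

Definition gfun {Z : Type} (c : nat -> Z) (u v : Z) (j : nat) : Z :=
  match j with 0 => u | 1 => v | j'.+2 => c j' end.

Lemma gfun_swap Z (c : nat -> Z) u v d : (1 < d)%N ->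
  gfun c u v @` `I_d = gfun c v u @` `I_d.
Proof.
move=> d1; wlog suff : u v / gfun c u v @` `I_d `<=` gfun c v u @` `I_d.
  by move=> H; apply/seteqP; split; apply: H.
move=> _ [[|[|j]] /= jd <-].
- by exists 1%N.
- by exists 0%N => //=; lia.
- by exists j.+2.
Qed.

Lemma gfun_card Z (c : nat -> Z) u v k :
  u <> v -> (forall j, (j < k)%N -> u <> c j) -> (forall j, (j < k)%N -> v <> c j) ->
  (forall i j, (i < k)%N -> (j < k)%N -> c i = c j -> i = j) ->
  gfun c u v @` `I_k.+2 #= `I_k.+2.
Proof.
move=> uv uc vc cinj; apply: inj_card_eq => a b; rewrite !in_setE /=.
case: a => [|[|a]]; case: b => [|[|b]] //= ha hb H; first [
  by case: (uv H) | by case: (uv (esym H)) |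
  by case: (uc b ltac:(lia) H) | by case: (vc b ltac:(lia) H) |
  by case: (uc a ltac:(lia) (esym H)) | by case: (vc a ltac:(lia) (esym H)) |
  by rewrite (cinj a b ltac:(lia) ltac:(lia) H) ].
Qed.

Definition Fn {Z : Type} n d (c : nat -> Z) u v (i : 'I_n) : Z :=
  gfun c u v (if (i < d)%N then val i else 1%N).

Lemma range_Fn Z n d c (u v : Z) : (1 < d)%N -> (d <= n)%N ->
  range (Fn n d c u v) = gfun c u v @` `I_d.
Proof.
move=> d1 dn; apply/seteqP; split.
- move=> _ [i _ <-]; rewrite /Fn; case: ifP => id.
  + by exists (val i).
  + by exists 1%N.
- move=> _ [j jd <-]; have jn : (j < n)%N by move: jd => /=; lia.
  by exists (Ordinal jn) => //; rewrite /Fn /= (_ : (j < d)%N = true).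
Qed.

Lemma Fn_dfwith Z n d c (u v z : Z) (i0 : 'I_n) : val i0 = 0%N -> (0 < d)%N ->
  @dfwith 'I_n (fun _ => Z) (Fn n d c u v) i0 z = Fn n d c z v.
Proof.
move=> i00 d0; apply: functional_extensionality_dep => j.
have [<-|ne] := eqVneq i0 j.
  by rewrite dfwithin /Fn; have -> : nat_of_ord i0 = 0%N := i00; rewrite d0 i00.
rewrite dfwithout // /Fn; case: ifP => // _.
have : val j != 0%N by apply: contra ne => /eqP j0; apply/eqP/val_inj; rewrite /= i00 j0.
by case: (val j) => [|[|j']].
Qed.

Lemma Zbr_range (Z : Type) n (hn : (0 < n)%N) (f : 'I_n -> Z) : Zbr Z n (range f).
Proof.
split; first by exists (f (Ordinal hn)), (Ordinal hn).
apply: card_le_trans (card_image_le f setT) _.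
by move/card_eqPle: (card_esym (@card_II n)) => [].
Qed.

Lemma Zstr_Zbr (Z : Type) n d S : (0 < d)%N -> (d <= n)%N -> Zstr Z d S -> Zbr Z n S.
Proof.
move=> d0 dn; rewrite /Zstr /= => /card_eqPle [Sd dS]; split.
  apply/set0P/negP => /eqP S0; move: dS; rewrite S0 => /card_le0P.
  by move/seteqP => [/(_ 0%N) /= H _]; apply: H.
by apply: card_le_trans Sd _; rewrite card_le_II.
Qed.

Lemma Zstr_closed_sub (Z : topologicalType) n d (hn : (0 < n)%N) (d0 : (0 < d)%N)
  (dn : (d <= n)%N) (F : set Z) :
  closed F -> @Zstr_closed Z n d [set S | Zstr Z d S /\ S `<=` F].
Proof.
move=> cF; split; first by move=> S [].
exists [set S | Zbr Z n S /\ ~ (S `<=` F)]; split.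
- split; first by move=> S [].
  have -> : @symq Z n @^-1` [set S | Zbr Z n S /\ ~ (S `<=` F)] =
    \bigcup_(i in setT) (@proj 'I_n (fun _ => Z) i) @^-1` (~` F).
    apply/seteqP; split.
    + move=> f [_ nsub] /=; apply: contrapT => H; apply: nsub => _ [i _ <-].
      by apply: contrapT => nFi; apply: H; exists i.
    + move=> f [i _ nFi]; split; first exact: Zbr_range.
      by move=> sub; apply: nFi; apply: sub; exists i.
  apply: bigcup_open => i _; apply: open_comp.
    by move=> f _; exact: proj_continuous.
  exact: closed_openC.
- apply/seteqP; split.
  + move=> S [ZS nAS]; split => //; split; first exact: Zstr_Zbr ZS.
    by move=> sub; apply: nAS.
  + by move=> S [[_ nsub] ZS]; split => // -[_ sub]; exact: nsub.
Qed.

Lemma closed_opc (X : discreteTopologicalType) (K' : set (one_point_compactification X)) :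
  K' None -> closed K'.
Proof.
move=> KN; rewrite -openC.
have -> : ~` K' = Some @` [set x | ~ K' (Some x)].
  apply/seteqP; split.
  - by case=> [x|] /= nK; [exists x | case: nK].
  - by move=> _ [x nK <-].
apply: one_point_compactification_open_some; exact: discrete_open.
Qed.

Lemma closed_image_opc (X : discreteTopologicalType) (Z : topologicalType)
  (hZh : hausdorff_space Z) (e : one_point_compactification X -> Z)
  (ec : continuous e) (K' : set (one_point_compactification X)) :
  K' None -> closed (e @` K').
Proof.
move=> KN; apply: compact_closed => //; apply: continuous_compact.
  exact: continuous_subspaceT.
apply: (subclosed_compact _ (@one_point_compactification_compact X)) => //.
exact: closed_opc.
Qed.

Theorem mainTheorem3 (Z : topologicalType)
  (hZc : compact [set: Z]) (hZh : hausdorff_space Z)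
  (X : discreteTopologicalType) (hXu : ~ countable [set: X])
  (e : one_point_compactification X -> Z) (he : embedding e)
  (n : nat) (hn : (0 < n)%N) :
  forall d : nat, (2 <= d <= n)%N -> ~ @Zstr_normal Z n d.
Proof.
move=> d /andP [d2 dn].
have [k dk] : exists k, d = k.+2 by exists (d - 2)%N; lia.
subst d.
case: he => einj econt _.
have Xinf : infinite_set [set: X].
  by move=> /finite_set_countable.
have /card_leP/unsquash phi0 := iffLR (infiniteP _) Xinf.
pose phi (j : nat) : X := set_val (phi0 (to_setT j)).
have phi_inj : injective phi.
  move=> a b /val_inj /(@inj _ _ _ phi0); rewrite !in_setE => /(_ I I).
  by move/(congr1 set_val).
pose c : nat -> Z := fun j => e (Some (phi j)).
have c_inj : forall i j, c i = c j -> i = j.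
  by move=> i j /einj [] /phi_inj.
pose eN := e None.
have eNc : forall j, eN <> c j by move=> j /einj.
pose K1 : set (one_point_compactification X) :=
  [set p | p = None \/ exists j, p = Some (phi j)].
pose K2 : set (one_point_compactification X) :=
  [set p | p = None \/ (exists2 j, (j < k)%N & p = Some (phi j)) \/
           exists y, ~ range phi y /\ p = Some y].
pose F1 := e @` K1. pose F2 := e @` K2.
have cF1 : closed F1 by apply: closed_image_opc => //; left.
have cF2 : closed F2 by apply: closed_image_opc => //; left.
pose A := [set S | Zstr Z k.+2 S /\ S `<=` F1].
pose B := [set S | Zstr Z k.+2 S /\ S `<=` F2].
have clA : Zstr_closed n k.+2 A by exact: Zstr_closed_sub.
have clB : Zstr_closed n k.+2 B by exact: Zstr_closed_sub.
have AB0 : A `&` B = set0.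
  apply/seteqP; split => // S [[ZS S1] [_ S2]].
  pose h := fun j => if j is j'.+1 then c j' else eN.
  have sub : S `<=` h @` `I_k.+1.
    move=> z Sz; have [p K1p ep] := S1 z Sz; have [q K2q eq] := S2 z Sz.
    have pq : p = q by apply: einj; rewrite ep eq.
    subst q; case: K1p => [pN|[j pj]].
      by exists 0%N => //; rewrite /h -ep pN.
    case: K2q => [|[[j' j'k pj']|[y [ny py]]]]; first by rewrite pj.
      exists j'.+1; first by rewrite /= ltnS.
      by rewrite /h /c -ep pj'.
    by exfalso; apply: ny; exists j => //; move: py; rewrite pj => -[].
  have : `I_k.+2 #<= `I_k.+1.
    have [_ IS] := iffLR (card_eqPle _ _) ZS.
    apply: card_le_trans IS _; apply: card_le_trans (subset_card_le sub) _.
    exact: card_image_le.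
  by rewrite card_le_II ltnn.
move=> norm.
have [U [V [[WU [[_ oWU] ->]] [WV [[_ oWV] ->]] AU BV UV0]]] := norm A B clA clB AB0.
pose i0 : 'I_n := Ordinal hn.
have d1 : (1 < k.+2)%N by [].
have dn' : (k.+2 <= n)%N by [].
have hC : forall m, exists C : set X, compact C /\ ((k <= m)%N ->
    forall x, ~ C x -> WU (range (Fn n k.+2 c (e (Some x)) (c m)))).
  move=> m; have [km|km] := leqP k m; last first.
    by exists set0; split; [exact: compact0 | lia].
  have aA : A (range (Fn n k.+2 c eN (c m))).
    rewrite range_Fn //; split.
      apply: gfun_card.
      - exact: eNc.
      - by move=> j _; exact: eNc.
      - by move=> j jk /c_inj; lia.
      - by move=> i j _ _; exact: c_inj.
    move=> _ [[|[|j]] _ <-] /=.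
    - by exists None; [left|].
    - by exists (Some (phi m)); [right; exists m|].
    - by exists (Some (phi j)); [right; exists j|].
  have /AU [WUa _] := aA.
  pose O := (@dfwith 'I_n (fun _ => Z) (Fn n k.+2 c eN (c m)) i0) @^-1` (@symq Z n @^-1` WU).
  have oO : open O.
    apply: (@open_comp Z {ptws 'I_n -> Z}
      (@dfwith 'I_n (fun _ => Z) (Fn n k.+2 c eN (c m)) i0)) => // z _.
    exact: dfwith_continuous.
  have OeN : O eN by rewrite /O /= Fn_dfwith.
  have Hn : nbhs (None : one_point_compactification X) (e @^-1` O).
    exact: (econt None _ (open_nbhs_nbhs (conj oO OeN))).
  move: Hn => /opc_nbhs_none [C [cC HC]]; exists C; split => // _ x nCx.
  by have := HC x nCx; rewrite /O /= Fn_dfwith.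
have [CU hCU] := choice hC.
have hC' : forall y, exists C : set X, compact C /\ (~ range phi y ->
    forall x, ~ C x -> WV (range (Fn n k.+2 c (e (Some x)) (e (Some y))))).
  move=> y; have [ry|ny] := pselect (range phi y).
    by exists set0; split => //; exact: compact0.
  have bB : B (range (Fn n k.+2 c eN (e (Some y)))).
    rewrite range_Fn //; split.
      apply: gfun_card.
      - by move=> /einj.
      - by move=> j _; exact: eNc.
      - by move=> j _ /einj [] yj; apply: ny; exists j.
      - by move=> i j _ _; exact: c_inj.
    move=> _ [[|[|j]] jk <-] /=.
    - by exists None; [left|].
    - by exists (Some y); [right; right; exists y|].
    - have jk' : (j < k)%N by move: jk => /=; lia.
      by exists (Some (phi j)) => //; right; left; exists j.
  have /BV [WVb _] := bB.
  pose O := (@dfwith 'I_n (fun _ => Z) (Fn n k.+2 c eN (e (Some y))) i0) @^-1` (@symq Z n @^-1` WV).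
  have oO : open O.
    apply: (@open_comp Z {ptws 'I_n -> Z}
      (@dfwith 'I_n (fun _ => Z) (Fn n k.+2 c eN (e (Some y))) i0)) => // z _.
    exact: dfwith_continuous.
  have OeN : O eN by rewrite /O /= Fn_dfwith.
  have Hn : nbhs (None : one_point_compactification X) (e @^-1` O).
    exact: (econt None _ (open_nbhs_nbhs (conj oO OeN))).
  move: Hn => /opc_nbhs_none [C [cC HC]]; exists C; split => // _ x nCx.
  by have := HC x nCx; rewrite /O /= Fn_dfwith.
have [CV hCV] := choice hC'.
have [y [ny hy]] : exists y, ~ range phi y /\ forall m, ~ CU m y.
  apply: contrapT => H; apply: hXu.
  have sub : [set: X] `<=` \bigcup_(m in [set: nat]) ([set phi m] `|` CU m).
    move=> x _; have [[m _ <-]|nx] := pselect (range phi x).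
      by exists m => //; left.
    apply: contrapT => nU; apply: H; exists x; split => // m Cm.
    by apply: nU; exists m => //; right.
  apply: sub_countable (subset_card_le sub) _.
  apply: bigcup_countable => // m _; apply: finite_set_countable.
  rewrite finite_setU; split; first exact: finite_set1.
  by apply: compact_discrete_finite; have [] := hCU m.
have [m [km nm]] : exists m, (k <= m)%N /\ ~ CV y (phi m).
  apply: contrapT => H.
  have fin : finite_set (CV y).
    by apply: compact_discrete_finite; have [] := hCV y.
  have sub : phi @` [set m | (k <= m)%N] `<=` CV y.
    by move=> _ [m km <-]; apply: contrapT => nm; apply: H; exists m.
  have fk : finite_set [set m | (k <= m)%N].
    have := eq_finite_set (@inj_card_eq _ _ [set m | (k <= m)%N] phi
                             (fun a b _ _ => @phi_inj a b)).
    by move=> <-; exact: sub_finite_set sub fin.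
  apply: infinite_nat.
  have -> : [set: nat] = `I_k `|` [set m | (k <= m)%N].
    apply/seteqP; split => // x _ /=; have [xk|kx] := ltnP x k; [by left|by right].
  by rewrite finite_setU; split => //; exact: finite_II.
have Su := (hCU m).2 km y (hy m).
have Sv := (hCV y).2 ny (phi m) nm.
rewrite range_Fn // in Su; rewrite range_Fn // gfun_swap // in Sv.
pose S := gfun c (e (Some y)) (c m) @` `I_k.+2.
have ZS : Zstr Z k.+2 S.
  apply: gfun_card.
  - by move=> /einj [] ym; apply: ny; exists m.
  - by move=> j _ /einj [] yj; apply: ny; exists j.
  - by move=> j jk /c_inj; lia.
  - by move=> i j _ _; exact: c_inj.
have : ((WU `&` Zstr Z k.+2) `&` (WV `&` Zstr Z k.+2)) S by [].
by rewrite UV0.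
Qed.
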